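(* Let $a,b\in \mathcal{A}^{\mathrm{gcEP}}$, $\lambda,\mu\in \mathbb{C}^*$. If $ab=\lambda ba$, $a^*b=\mu ba^*$, then $ab\in \mathcal{A}^{\mathrm{gcEP}}$. In this case, $(ab)^{\mathrm{gcEP}}=b^{\mathrm{gcEP}}a^{\mathrm{gcEP}}=\lambda^{-1}a^{\mathrm{gcEP}}b^{\mathrm{gcEP}}$.
   Context: $\mathcal{A}$ is a complex Banach *-algebra with identity, and $\mathbb{C}^*$ is the set of nonzero complex numbers. An element $a$ has a generalized core-EP inverse if there is $x\in\mathcal{A}$ with $x=ax^2$, $(ax)^*=ax$, $\lim_{n\to\infty}\|a^n-xa^{n+1}\|^{1/n}=0$; such $x$ is unique, denoted $a^{\mathrm{gcEP}}$, and $\mathcal{A}^{\mathrm{gcEP}}$ is the set of such $a$. *)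

(* Defs.v *)
From HB Require Import structures.
From mathcomp Require Import all_boot all_order all_algebra.
From mathcomp Require Import all_classical all_reals all_analysis.
From mathcomp Require Import complex.
Set Implicit Arguments. Unset Strict Implicit. Unset Printing Implicit Defensive.
Import Order.TTheory GRing.Theory Num.Theory.
Import numFieldNormedType.Exports.
Local Open Scope classical_set_scope.
Local Open Scope ring_scope.

Record banach_star_algebra (R : realType) (A : algType R[i])
    (star : A -> A) (nrm : A -> R) : Prop := BanachStarAlgebra {
  star_add : forall x y : A, star (x + y) = star x + star y;
  star_scale : forall (c : R[i]) (x : A), star (c *: x) = conjc c *: star x;
  star_mul : forall x y : A, star (x * y) = star y * star x;
  star_invol : forall x : A, star (star x) = x;
  nrm_ge0 : forall x : A, 0 <= nrm x;
  nrm_eq0 : forall x : A, nrm x = 0 -> x = 0;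
  nrm_triangle : forall x y : A, nrm (x + y) <= nrm x + nrm y;
  nrm_scale : forall (c : R[i]) (x : A), nrm (c *: x) = Normc.normc c * nrm x;
  nrm_submul : forall x y : A, nrm (x * y) <= nrm x * nrm y;
  nrm_complete : forall u : nat -> A,
    (forall e : R, 0 < e -> exists N : nat, forall m n : nat,
        (N <= m)%N -> (N <= n)%N -> nrm (u m - u n) < e) ->
    exists l : A, forall e : R, 0 < e -> exists N : nat, forall n : nat,
        (N <= n)%N -> nrm (u n - l) < e
}.

Definition is_gcEP_inverse (R : realType) (A : algType R[i])
    (star : A -> A) (nrm : A -> R) (a x : A) : Prop :=
  [/\ x = a * x ^+ 2,
      star (a * x) = a * x &
      (fun n : nat => powR (nrm (a ^+ n - x * a ^+ n.+1)) (n%:R^-1)) @ \oo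
        --> (0 : R)].

Definition has_gcEP (R : realType) (A : algType R[i])
    (star : A -> A) (nrm : A -> R) (a : A) : Prop :=
  exists x : A, is_gcEP_inverse star nrm a x.

(* Main.v *)
Require Import Defs.
From HB Require Import structures.
From mathcomp Require Import all_boot all_order all_algebra.
From mathcomp Require Import all_classical all_reals all_analysis.
From mathcomp Require Import complex.
From mathcomp Require Import ring lra.
Import Order.TTheory GRing.Theory Num.Theory.
Import numFieldNormedType.Exports.
Local Open Scope classical_set_scope.
Local Open Scope ring_scope.
Section Analysis.
Variable R : realType.

Definition qn (u : nat -> R) := forall d : R, 0 < d ->
  exists N, forall n, (N <= n)%N -> u n <= d ^+ n.

Lemma powR_inv_pow (x : R) n : 0 <= x -> (0 < n)%N ->
  powR (powR x (n%:R^-1)) n%:R = x.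
Proof.
move=> x0 n0; rewrite -powRrM mulVf ?powRr1 //.
by rewrite pnatr_eq0 -lt0n.
Qed.

Lemma lim_qn (u : nat -> R) : (forall n, 0 <= u n) ->
  (fun n : nat => powR (u n) (n%:R^-1)) @ \oo --> (0 : R) -> qn u.
Proof.
move=> u0 /cvgrPdist_le H d d0.
have [N _ HN] := H d d0.
exists (maxn N 1) => n; rewrite geq_max => /andP[Nn n1].
have := HN n Nn; rewrite sub0r normrN ger0_norm ?powR_ge0 // => h.
rewrite -(powR_inv_pow _ _ (u0 n) n1) powR_mulrn ?powR_ge0 //.
by rewrite ler_pXn2r // ?nnegrE ?powR_ge0 // ltW.
Qed.

Lemma qn_lim (u : nat -> R) : (forall n, 0 <= u n) -> qn u ->
  (fun n : nat => powR (u n) (n%:R^-1)) @ \oo --> (0 : R).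
Proof.
move=> u0 H; apply/cvgrPdist_le => e e0.
have [N HN] := H e e0.
exists (maxn N 1) => // n /=; rewrite geq_max => /andP[Nn n1].
rewrite sub0r normrN ger0_norm ?powR_ge0 //.
apply: (le_trans (ge0_ler_powR _ _ _ (HN n Nn)));
  rewrite ?invr_ge0 ?nnegrE ?exprn_ge0 ?(ltW e0) //.
rewrite -powR_mulrn ?(ltW e0) // -powRrM mulfV ?powRr1 ?(ltW e0) //.
by rewrite pnatr_eq0 -lt0n.
Qed.

Lemma qn_const (c : R) : 0 <= c -> qn (fun _ => c) -> c = 0.
Proof.
move=> c0 H; apply/eqP; rewrite eq_le c0 andbT; apply/negP => /negP.
rewrite -ltNge => cp.
have dp : 0 < c / (c + 2) by rewrite divr_gt0 // ltr_wpDl.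
have [N HN] := H _ dp.
have := HN N.+1 (leqnSn N); rewrite exprS.
have d1 : c / (c + 2) <= 1 by rewrite ler_pdivrMr ?mul1r ?ltr_wpDl // lerDl.
have e1 : (c / (c + 2)) ^+ N <= 1 by apply: exprn_ile1 => //; apply: ltW.
have h2 : c / (c + 2) * (c / (c + 2)) ^+ N <= c / (c + 2).
  by rewrite ler_piMr // ltW.
move=> h; have h3 := le_trans h h2.
move: h3; rewrite ler_pdivlMr ?ltr_wpDl //.
nra.
Qed.

Lemma exists_pow2 (C : R) : exists N, forall n, (N <= n)%N -> C <= 2 ^+ n.
Proof.
exists (Num.Def.trunc `|C|).+1 => n Nn.
apply: (le_trans (ler_norm C)); apply: ltW.
apply: (lt_le_trans (truncnS_gt _)).
apply: (le_trans (y := n%:R)); first by rewrite ler_nat.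
rewrite -natrX ler_nat; apply: ltnW; exact: ltn_expl.
Qed.

Lemma qn_bound (u v w : nat -> R) (C M : R) : 0 <= C -> 0 <= M ->
  (forall n, 0 <= v n) -> (forall n, 0 <= w n) ->
  qn v -> qn w -> (forall n, (0 < n)%N -> u n <= C * M ^+ n * (v n + w n)) ->
  qn u.
Proof.
move=> C0 M0 v0 w0 Hv Hw Hu d d0.
set d' := d / (2 * (M + 1)).
have M1 : 0 < M + 1 by rewrite ltr_wpDl.
have d'0 : 0 < d' by rewrite divr_gt0 // mulr_gt0.
have Md : M * d' <= d / 2.
  have -> : M * d' = d / 2 * (M / (M + 1)).
    by rewrite /d'; field; rewrite (gt_eqF M1).
  rewrite ler_piMr ?divr_ge0 ?(ltW d0) //.
  by rewrite ler_pdivrMr // mul1r lerDl.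
have [N1 H1] := Hv _ d'0.
have [N2 H2] := Hw _ d'0.
have [N3 H3] := exists_pow2 (2 * C).
exists (maxn (maxn N1 N2) (maxn N3 1)) => n.
rewrite !geq_max => /andP[/andP[n1 n2] /andP[n3 n0]].
apply: (le_trans (Hu n n0)).
apply: (le_trans (y := C * M ^+ n * (2 * d' ^+ n))).
  apply: ler_wpM2l; first by rewrite mulr_ge0 ?exprn_ge0.
  by rewrite mulr2n mulrDl mul1r lerD // ?H1 ?H2.
have -> : C * M ^+ n * (2 * d' ^+ n) = (2 * C) * (M * d') ^+ n.
  rewrite [(M * d') ^+ n]exprMn; ring.
apply: (le_trans (y := (2 * C) * (d / 2) ^+ n)).
  apply: ler_wpM2l; first by rewrite mulr_ge0.
  have hx : M * d' \in Num.nneg by rewrite nnegrE mulr_ge0 // ltW.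
  have hy : d / 2 \in Num.nneg by rewrite nnegrE divr_ge0 // ltW.
  by rewrite (ler_pXn2r n0 hx hy).
rewrite exprMn mulrCA ler_piMr ?exprn_ge0 ?(ltW d0) //.
have h3 := H3 n n3.
by rewrite exprVn ler_pdivrMr ?exprn_gt0 // mul1r.
Qed.

Lemma real_ineq (K e f p q : R) : 0<=K -> 0<=e -> 0<=f -> 0<=p -> 0<=q ->
  K * f + q * e * K <= K * (1 + p + q) * (e + f).
Proof.
move=> K0 e0 f0 p0 q0.
have h1 := mulr_ge0 K0 e0. have h2 := mulr_ge0 (mulr_ge0 K0 p0) e0.
have h3 := mulr_ge0 (mulr_ge0 K0 p0) f0. have h4 := mulr_ge0 (mulr_ge0 K0 q0) f0.
nra.
Qed.

Lemma real_ineq2 (K e f p q : R) : 0<=K -> 0<=e -> 0<=f -> 0<=p -> 0<=q ->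
  K * e + f * p * K <= K * (1 + p + q) * (e + f).
Proof.
move=> K0 e0 f0 p0 q0.
have h1 := mulr_ge0 K0 f0. have h2 := mulr_ge0 (mulr_ge0 K0 p0) e0.
have h3 := mulr_ge0 (mulr_ge0 K0 q0) e0. have h4 := mulr_ge0 (mulr_ge0 K0 q0) f0.
nra.
Qed.
End Analysis.
Arguments qn {R} u.
Arguments qn_const {R}.
Arguments qn_bound {R}.
Arguments lim_qn {R}.
Arguments qn_lim {R}.
Arguments real_ineq {R}.
Arguments real_ineq2 {R}.
Section Alg.
Variables (R : realType) (A : algType R[i]) (star : A -> A) (nrm : A -> R).
Hypothesis HA : banach_star_algebra star nrm.

Lemma normc_ge0 (c : R[i]) : 0 <= Normc.normc c.
Proof. by case: c => a b /=; apply: sqrtr_ge0. Qed.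

Lemma normcN1 : Normc.normc (-1 : R[i]) = 1.
Proof. by rewrite /Normc.normc /= oppr0 expr0n /= addr0 sqrrN expr1n sqrtr1. Qed.

Lemma normcX (c : R[i]) n : Normc.normc (c ^+ n) = Normc.normc c ^+ n.
Proof.
elim: n => [|n IH]; first by rewrite !expr0 Normc.normc1.
by rewrite !exprS Normc.normcM IH.
Qed.

Lemma nrm0 : nrm 0 = 0.
Proof. by rewrite -(scale0r (0 : A)) (nrm_scale HA) Normc.normc0 mul0r. Qed.

Lemma nrmN x : nrm (- x) = nrm x.
Proof. by rewrite -scaleN1r (nrm_scale HA) normcN1 mul1r. Qed.

Lemma nrmB x y : nrm (x - y) <= nrm x + nrm y.
Proof. by rewrite -(nrmN y); apply: (nrm_triangle HA). Qed.

Lemma nrmM x y : nrm (x * y) <= nrm x * nrm y.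
Proof. exact: (nrm_submul HA). Qed.

Lemma nrm_ge0' x : 0 <= nrm x.
Proof. exact: (nrm_ge0 HA). Qed.

Lemma nrmX x n : nrm (x ^+ n) <= nrm 1 * nrm x ^+ n.
Proof.
elim: n => [|n IH]; first by rewrite expr0 expr0 mulr1.
rewrite exprS; apply: (le_trans (nrmM _ _)).
rewrite exprS mulrCA ler_wpM2l ?nrm_ge0' //.
Qed.

Lemma nrmZX (s : R[i]) n x : nrm (s ^+ n *: x) = Normc.normc s ^+ n * nrm x.
Proof. by rewrite (nrm_scale HA) normcX. Qed.

Lemma nrmM3 x y z : nrm (x * y * z) <= nrm x * nrm y * nrm z.
Proof.
apply: (le_trans (nrmM _ _)); rewrite ler_wpM2r ?nrm_ge0' //; exact: nrmM.
Qed.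

Lemma nrmM4 x y z u : nrm (x * y * z * u) <= nrm x * nrm y * nrm z * nrm u.
Proof.
apply: (le_trans (nrmM _ _)); rewrite ler_wpM2r ?nrm_ge0' //; exact: nrmM3.
Qed.

Lemma nrm_eq0' x : nrm x = 0 -> x = 0.
Proof. exact: (nrm_eq0 HA). Qed.

Lemma zero_by (w : A) (e : nat -> A) (C M : R) : 0 <= C -> 0 <= M ->
  qn (fun n => nrm (e n)) ->
  (forall n, (0 < n)%N -> nrm w <= C * M ^+ n * nrm (e n)) -> w = 0.
Proof.
move=> C0 M0 He Hw; apply: nrm_eq0'; apply: qn_const; first exact: nrm_ge0'.
apply: (qn_bound _ (fun n => nrm (e n)) (fun n => nrm (e n)) C M) => //.
- by move=> n; apply: nrm_ge0'.
- by move=> n; apply: nrm_ge0'.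
move=> n n0; apply: (le_trans (Hw n n0)); rewrite ler_wpM2l ?mulr_ge0 ?exprn_ge0 //.
by rewrite lerDl nrm_ge0'.
Qed.

Lemma zero_by2 (w : A) (e f : nat -> A) (C M : R) : 0 <= C -> 0 <= M ->
  qn (fun n => nrm (e n)) -> qn (fun n => nrm (f n)) ->
  (forall n, (0 < n)%N -> nrm w <= C * M ^+ n * (nrm (e n) + nrm (f n))) -> w = 0.
Proof.
move=> C0 M0 He Hf Hw; apply: nrm_eq0'; apply: qn_const; first exact: nrm_ge0'.
apply: (qn_bound _ (fun n => nrm (e n)) (fun n => nrm (f n)) C M) => //.
- by move=> n; apply: nrm_ge0'.
- by move=> n; apply: nrm_ge0'.
Qed.


Definition Eseq (c w : A) (n : nat) := c ^+ n - w * c ^+ n.+1.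

Section Pair.
Variables (c w : A).
Hypothesis Hw : is_gcEP_inverse star nrm c w.

Lemma P1 : c * (w * w) = w.
Proof. by case: Hw => h _ _; rewrite -expr2 -h. Qed.

Lemma qnE : qn (fun n => nrm (Eseq c w n)).
Proof.
case: Hw => _ _ h; apply: (lim_qn (fun n => nrm (Eseq c w n))).
  by move=> n; apply: nrm_ge0'.
exact: h.
Qed.

Lemma P2 k : c ^+ k * w ^+ k.+1 = w.
Proof.
elim: k => [|k IH]; first by rewrite expr0 mul1r expr1.
rewrite exprSr [w ^+ k.+2]exprS [w ^+ k.+1]exprS !mulrA.
rewrite -(mulrA (c ^+ k)) -(mulrA (c ^+ k)) -(mulrA c) P1.
by rewrite -mulrA -exprS IH.
Qed.

Lemma P3 k : c ^+ k.+1 * w ^+ k.+1 = c * w.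
Proof. by rewrite exprS -mulrA P2. Qed.

Lemma P4 : w * c * w = w.
Proof.
apply/eqP; rewrite eq_sym -subr_eq0; apply/eqP.
apply: (zero_by _ (Eseq c w) (nrm 1 * nrm w) (nrm w));
  rewrite ?mulr_ge0 ?nrm_ge0' //; first exact: qnE.
move=> n _.
have -> : w - w * c * w = Eseq c w n * w ^+ n.+1.
  by rewrite /Eseq mulrBl P2 -(mulrA w (c ^+ n.+1)) P3 mulrA.
apply: (le_trans (nrmM _ _)); rewrite mulrC ler_wpM2r ?nrm_ge0' //.
apply: (le_trans (nrmX _ _)); rewrite exprS.
by rewrite mulrA [nrm 1 * _]mulrC.
Qed.

Lemma P5 n : (1 - c * w) * c ^+ n.+1 = c * Eseq c w n.
Proof. by rewrite /Eseq mulrBl mul1r mulrBr -exprS !mulrA. Qed.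

Lemma P6 : w * (c * (c * w)) = c * w.
Proof.
apply/eqP; rewrite eq_sym -subr_eq0; apply/eqP.
apply: (zero_by _ (Eseq c w) (nrm 1) (nrm w));
  rewrite ?mulr_ge0 ?nrm_ge0' //; first exact: qnE.
case=> [//|n] _.
have -> : c * w - w * (c * (c * w)) = Eseq c w n.+1 * w ^+ n.+1.
  rewrite -{2}(P3 n) (mulrA c) -exprS (mulrA w).
  by rewrite /Eseq mulrBl P3.
apply: (le_trans (nrmM _ _)); rewrite mulrC ler_wpM2r ?nrm_ge0' //.
exact: nrmX.
Qed.


Lemma Prw : c * w * w = w.
Proof. by rewrite -mulrA P1. Qed.

Lemma Pwr : w * (c * w) = w.
Proof. by rewrite mulrA P4. Qed.

Lemma Pr2 : c * w * (c * w) = c * w.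
Proof. by rewrite -mulrA Pwr. Qed.

Lemma Pstar : star (c * w) = c * w.
Proof. by case: Hw. Qed.

End Pair.

Lemma eq_ler (x y : R) : x = y -> x <= y.
Proof. by move->. Qed.

Lemma pow_comm (d c : A) (s : R[i]) : d * c = s *: (c * d) ->
  forall n, d * c ^+ n = s ^+ n *: (c ^+ n * d).
Proof.
move=> h; elim=> [|n IH]; first by rewrite !expr0 scale1r mul1r mulr1.
have -> : d * c ^+ n.+1 = d * c ^+ n * c by rewrite exprSr mulrA.
rewrite IH -scalerAl -(mulrA _ d c) h -scalerAr scalerA.
by rewrite -exprSr mulrA -exprSr.
Qed.

Lemma proj_key (c w d : A) (s : R[i]) : is_gcEP_inverse star nrm c w ->
  d * c = s *: (c * d) -> c * w * d * (c * w) = d * (c * w).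
Proof.
move=> Hw h.
apply/eqP; rewrite eq_sym -subr_eq0; apply/eqP.
apply: (zero_by _ (Eseq c w)
  (Normc.normc s * nrm c * nrm d * nrm 1 * nrm w) (Normc.normc s * nrm w));
  rewrite ?mulr_ge0 ?nrm_ge0' ?normc_ge0 //; first exact: qnE.
move=> n _.
have -> : d * (c * w) - c * w * d * (c * w)
    = s ^+ n.+1 *: (c * Eseq c w n * d * w ^+ n.+1).
  rewrite -(P3 _ _ Hw n).
  have -> : d * (c ^+ n.+1 * w ^+ n.+1) - c ^+ n.+1 * w ^+ n.+1 * d * (c ^+ n.+1 * w ^+ n.+1)
     = (1 - c ^+ n.+1 * w ^+ n.+1) * d * (c ^+ n.+1 * w ^+ n.+1).
    by rewrite !mulrBl mul1r.
  rewrite {1}(P3 _ _ Hw n).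
  rewrite mulrA -(mulrA (1 - c * w) d) (pow_comm _ _ _ h) -scalerAr -scalerAl mulrA P5.
  by rewrite -!mulrA.
rewrite nrmZX.
apply: (le_trans (y := Normc.normc s ^+ n.+1 *
   (nrm c * nrm (Eseq c w n) * nrm d * (nrm 1 * nrm w ^+ n.+1)))).
  rewrite ler_wpM2l ?exprn_ge0 ?normc_ge0 //.
  apply: (le_trans (nrmM4 _ _ _ _)).
  rewrite ler_wpM2l ?mulr_ge0 ?nrm_ge0' //; exact: nrmX.
apply: eq_ler; rewrite !exprS exprMn; ring.
Qed.

Lemma G (c w d : A) (s t : R[i]) : is_gcEP_inverse star nrm c w ->
  d * c = s *: (c * d) -> star d * c = t *: (c * star d) ->
  d * (c * w) = c * w * d.
Proof.
move=> Hw h1 h2.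
have k1 := proj_key _ _ _ _ Hw h1.
have k2 := proj_key _ _ _ _ Hw h2.
have k3 : star (c * w * star d * (c * w)) = star (star d * (c * w)) by rewrite k2.
rewrite (star_mul HA (c * w * star d) (c * w)) (star_mul HA (c * w) (star d))
  (star_mul HA (star d) (c * w)) (star_invol HA) !(Pstar _ _ Hw) in k3.
by rewrite -k3 (mulrA (c * w)) k1.
Qed.

Lemma H (c w d : A) (s : R[i]) : is_gcEP_inverse star nrm c w ->
  d * c = s *: (c * d) -> d * (c * w) = c * w * d ->
  w * d = s *: (d * w).
Proof.
move=> Hw h hr.
have dw : d * w = w * c * d * w.
  have e1 : d * w = c * w * d * w by rewrite -{1}(Prw _ _ Hw) mulrA hr.
  rewrite e1 -{1}(P6 _ _ Hw).
  have -> : w * (c * (c * w)) * d * w = w * c * (c * w * d) * w by rewrite !mulrA.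
  by rewrite -hr (mulrA (w * c) d) -(mulrA (w * c * d) (c * w) w) (Prw _ _ Hw).
have wd : w * d = w * d * (c * w).
  by rewrite -{1}(Pwr _ _ Hw) -mulrA -hr mulrA.
rewrite wd mulrA -(mulrA w) h -scalerAr -scalerAl dw.
by rewrite !mulrA.
Qed.

Lemma U (c w1 w2 : A) : is_gcEP_inverse star nrm c w1 ->
  is_gcEP_inverse star nrm c w2 -> w1 = w2.
Proof.
move=> H1 H2.
have key : forall u v, is_gcEP_inverse star nrm c u -> is_gcEP_inverse star nrm c v ->
    c * v * (c * u) = c * u.
  move=> u v Hu Hv.
  apply/eqP; rewrite eq_sym -subr_eq0; apply/eqP.
  apply: (zero_by _ (Eseq c v) (nrm c * nrm 1 * nrm u) (nrm u));
    rewrite ?mulr_ge0 ?nrm_ge0' //; first exact: qnE.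
  move=> n _.
  have -> : c * u - c * v * (c * u) = c * Eseq c v n * u ^+ n.+1.
    rewrite -(P5 c v n) -(P3 _ _ Hu n).
    by rewrite mulrBl mul1r !mulrA mulrBl.
  apply: (le_trans (nrmM _ _)).
  apply: (le_trans (y := nrm c * nrm (Eseq c v n) * (nrm 1 * nrm u ^+ n.+1))).
    apply: ler_pM; rewrite ?nrm_ge0' ?mulr_ge0 //; [exact: nrmM | exact: nrmX].
  apply: eq_ler; rewrite exprS; ring.
have r12 := key _ _ H1 H2.
have r21 := key _ _ H2 H1.
have req : c * w1 = c * w2.
  rewrite -r12 -{1}(Pstar _ _ H1) -(Pstar _ _ H2) -(star_mul HA) -{2}r21.
  by rewrite -(Pstar _ _ H2); congr star; rewrite -{1}(Pstar _ _ H2) (star_mul HA) (Pstar _ _ H1) (Pstar _ _ H2) -r21 (Pstar _ _ H2).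
apply/eqP; rewrite -subr_eq0; apply/eqP.
apply: (zero_by2 _ (Eseq c w2) (Eseq c w1) (nrm 1 * nrm w2) (nrm w2));
  rewrite ?mulr_ge0 ?nrm_ge0' //; try exact: qnE.
move=> n _.
have -> : w1 - w2 = (Eseq c w2 n - Eseq c w1 n) * w2 ^+ n.+1.
  have -> : w1 - w2 = (w1 - w2) * (c * w2).
    by rewrite mulrBl (Pwr _ _ H2) -req (Pwr _ _ H1).
  rewrite -(P3 _ _ H2 n) mulrA; congr (_ * _).
  have hh : forall a x y : A, a - x - (a - y) = y - x.
    by move=> a x y; rewrite opprB addrC addrA subrK.
  by rewrite /Eseq mulrBl hh.
apply: (le_trans (nrmM _ _)).
apply: (le_trans (y := (nrm (Eseq c w2 n) + nrm (Eseq c w1 n)) * (nrm 1 * nrm w2 ^+ n.+1))).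
  apply: ler_pM; rewrite ?nrm_ge0' //; [exact: nrmB | exact: nrmX].
apply: eq_ler; rewrite exprS; ring.
Qed.

Lemma pow_comm' (d c : A) (s : R[i]) : d * c = s *: (c * d) ->
  forall n, d ^+ n * c = s ^+ n *: (c * d ^+ n).
Proof.
move=> h; elim=> [|n IH]; first by rewrite !expr0 scale1r mul1r mulr1.
have -> : d ^+ n.+1 * c = d * (d ^+ n * c) by rewrite exprS mulrA.
by rewrite IH -scalerAr (mulrA d c) h -scalerAl scalerA -exprSr -mulrA -exprS.
Qed.

Lemma nrmX_le x M n : nrm x <= M -> nrm (x ^+ n) <= nrm 1 * M ^+ n.
Proof.
move=> h; apply: (le_trans (nrmX _ _)); rewrite ler_wpM2l ?nrm_ge0' //.
by rewrite lerXn2r // nnegrE (le_trans (nrm_ge0' x)).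
Qed.

Lemma inv_scale (l : R[i]) (u v : A) : l != 0 -> u = l *: v -> v = l^-1 *: u.
Proof. by move=> l0 ->; rewrite scalerA mulVf // scale1r. Qed.

Section Main.
Variables (a b x y : A) (l mu : R[i]).
Hypotheses (Hx : is_gcEP_inverse star nrm a x) (Hy : is_gcEP_inverse star nrm b y).
Hypotheses (l0 : l != 0) (m0 : mu != 0).
Hypotheses (hab : a * b = l *: (b * a)) (hab' : star a * b = mu *: (b * star a)).

Lemma f1 : b * a = l^-1 *: (a * b).
Proof. exact: inv_scale. Qed.

Lemma f2 : star b * a = conjc mu *: (a * star b).
Proof.
have := congr1 star hab'.
by rewrite !(star_mul HA) (star_scale HA) !(star_mul HA) !(star_invol HA).
Qed.

Lemma bp : b * (a * x) = a * x * b.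
Proof. exact: (G _ _ _ _ _ Hx f1 f2). Qed.

Lemma xb : x * b = l^-1 *: (b * x).
Proof. exact: (H _ _ _ _ Hx f1 bp). Qed.

Lemma aq : a * (b * y) = b * y * a.
Proof. exact: (G _ _ _ _ _ Hy hab hab'). Qed.

Lemma ya : y * a = l *: (a * y).
Proof. exact: (H _ _ _ _ Hy hab aq). Qed.

Lemma f3 : star a * (b * y) = b * y * star a.
Proof.
have := congr1 star aq.
by rewrite !(star_mul HA) -(star_mul HA b y) (Pstar _ _ Hy).
Qed.

Lemma ya' : y * star a = mu *: (star a * y).
Proof. exact: (H _ _ _ _ Hy hab' f3). Qed.

Lemma f4 : star y * a = (conjc mu)^-1 *: (a * star y).
Proof.
apply: inv_scale; first by rewrite conjc_eq0.
have := congr1 star ya'.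
by rewrite (star_scale HA) !(star_mul HA) (star_invol HA).
Qed.

Lemma yp : y * (a * x) = a * x * y.
Proof. exact: (G _ _ _ _ _ Hx ya f4). Qed.

Lemma xy : x * y = l *: (y * x).
Proof. exact: (H _ _ _ _ Hx ya yp). Qed.

Lemma yx : y * x = l^-1 *: (x * y).
Proof. exact: inv_scale xy. Qed.

Lemma ay : a * y = l^-1 *: (y * a).
Proof. exact: inv_scale ya. Qed.

Lemma bx : b * x = l *: (x * b).
Proof. by rewrite xb scalerA mulfV // scale1r. Qed.


Lemma zi : y * x = a * b * (y * x) ^+ 2.
Proof.
rewrite expr2 -(mulrA y x (y * x)) (mulrA x y x) (xy).
rewrite -scalerAl -scalerAr -scalerAr !mulrA.
rewrite -(mulrA a b y) -(mulrA a (b * y) y) (Prw _ _ Hy) (ay).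
rewrite -!scalerAl scalerA mulfV // scale1r.
by rewrite -!mulrA (P1 _ _ Hx).
Qed.

Lemma qx : b * y * x = x * (b * y).
Proof.
rewrite -mulrA (yx) -scalerAr (mulrA b x y) (bx).
by rewrite -scalerAl scalerA mulVf // scale1r !mulrA.
Qed.

Lemma zii : star (a * b * (y * x)) = a * b * (y * x).
Proof.
have e1 : a * b * (y * x) = b * y * (a * x).
  by rewrite mulrA -(mulrA a b y) aq !mulrA.
have e2 : a * x * (b * y) = b * y * (a * x).
  by rewrite -mulrA -qx mulrA aq mulrA.
by rewrite e1 (star_mul HA) (Pstar _ _ Hx) (Pstar _ _ Hy) e2.
Qed.


Lemma bu : b * (x * a) = x * a * b.
Proof.
by rewrite mulrA bx -scalerAl -(mulrA x b a) f1 -scalerAr scalerA mulfV // scale1r mulrA.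
Qed.

Lemma av : a * (y * b) = y * b * a.
Proof.
by rewrite mulrA ay -scalerAl -(mulrA y a b) hab -scalerAr scalerA mulVf // scale1r mulrA.
Qed.

Lemma zab : y * x * (a * b) = y * b * (x * a).
Proof. by rewrite -mulrA (mulrA x a b) -bu !mulrA. Qed.

Lemma gform n : (a * b) ^+ n - y * x * (a * b) ^+ n.+1
  = (1 - y * b * (x * a)) * (a * b) ^+ n.
Proof. by rewrite exprS mulrA zab mulrBl mul1r. Qed.

Lemma Eform (c w : A) n : Eseq c w n = (1 - w * c) * c ^+ n.
Proof. by rewrite /Eseq mulrBl mul1r -mulrA -exprS. Qed.

Lemma case1 : 1 <= Normc.normc l -> forall n, exists s,
  Normc.normc s <= 1 /\ (a * b) ^+ n = s *: (a ^+ n * b ^+ n).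
Proof.
move=> hl; elim=> [|n [s [hs e]]].
  by exists 1; rewrite Normc.normc1 !expr0 scale1r mulr1.
exists (s * l^-1 ^+ n); split.
  rewrite Normc.normcM normcX Normc.normcV.
  apply: mulr_ile1 => //; rewrite ?normc_ge0 ?exprn_ge0 ?invr_ge0 ?normc_ge0 //.
  apply: exprn_ile1; rewrite ?invr_ge0 ?normc_ge0 //.
  by rewrite invf_le1 // (lt_le_trans ltr01).
rewrite exprSr e -scalerAl (mulrA _ a b) -(mulrA (a ^+ n) (b ^+ n) a).
rewrite (pow_comm' _ _ _ f1) -scalerAr -scalerAl scalerA.
by rewrite !mulrA -exprSr -mulrA -exprSr.
Qed.

Lemma case2 : Normc.normc l <= 1 -> forall n, exists s,
  Normc.normc s <= 1 /\ (a * b) ^+ n = s *: (b ^+ n * a ^+ n).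
Proof.
move=> hl; elim=> [|n [s [hs e]]].
  by exists 1; rewrite Normc.normc1 !expr0 scale1r mulr1.
exists (s * l ^+ n.+1); split.
  rewrite Normc.normcM normcX.
  apply: mulr_ile1 => //; rewrite ?normc_ge0 ?exprn_ge0 ?normc_ge0 //.
  by apply: exprn_ile1; rewrite ?normc_ge0.
rewrite exprSr e -scalerAl -(mulrA (b ^+ n)) (mulrA (a ^+ n) a) -exprSr.
rewrite (pow_comm' _ _ _ hab) -scalerAr scalerA.
by rewrite mulrA -exprSr.
Qed.


Lemma qn_g : qn (fun n => nrm ((a * b) ^+ n - y * x * (a * b) ^+ n.+1)).
Proof.
have qE := qnE _ _ Hx; have qF := qnE _ _ Hy.
have M0 : 0 <= nrm a + nrm b by rewrite addr_ge0 ?nrm_ge0'.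
apply: (qn_bound _ (fun n => nrm (Eseq a x n)) (fun n => nrm (Eseq b y n))
  (nrm 1 * (1 + nrm (x * a) + nrm (y * b))) (nrm a + nrm b));
  rewrite ?mulr_ge0 ?addr_ge0 ?nrm_ge0' //; try (by move=> n; apply: nrm_ge0').
move=> n _; rewrite gform.
have Ma : nrm (a ^+ n) <= nrm 1 * (nrm a + nrm b) ^+ n.
  by apply: nrmX_le; rewrite lerDl nrm_ge0'.
have Mb : nrm (b ^+ n) <= nrm 1 * (nrm a + nrm b) ^+ n.
  by apply: nrmX_le; rewrite lerDr nrm_ge0'.
have K0 : 0 <= nrm 1 * (nrm a + nrm b) ^+ n by rewrite mulr_ge0 ?exprn_ge0 ?nrm_ge0'.
have -> : nrm 1 * (1 + nrm (x * a) + nrm (y * b)) * (nrm a + nrm b) ^+ n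
  = (nrm 1 * (nrm a + nrm b) ^+ n) * (1 + nrm (x * a) + nrm (y * b)) by ring.
move: K0 Ma Mb; set K := nrm 1 * (nrm a + nrm b) ^+ n => K0 Ma Mb.
set u := x * a; set v := y * b.
case/orP: (le_total 1 (Normc.normc l)) => hl.
- have [s [hs e]] := case1 hl n.
  rewrite e -scalerAr (nrm_scale HA).
  have cv : v * a ^+ n = a ^+ n * v by apply: commrX; rewrite /GRing.comm av.
  have decomp : (1 - v * u) * (a ^+ n * b ^+ n)
      = a ^+ n * Eseq b y n + v * Eseq a x n * b ^+ n.
    rewrite !Eform -/u -/v.
    have -> : 1 - v * u = (1 - v) + v * (1 - u)
      by rewrite mulrBr mulr1 addrA subrK.
    rewrite mulrDl; congr (_ + _).
      by rewrite mulrA mulrBl mul1r cv -{1}(mulr1 (a ^+ n)) -mulrBr mulrA.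
    by rewrite !mulrA.
  rewrite decomp.
  apply: (le_trans (ler_piMl (nrm_ge0' _) hs)).
  apply: (le_trans (nrm_triangle HA _ _)).
  apply: (le_trans (y := K * nrm (Eseq b y n) + nrm v * nrm (Eseq a x n) * K)).
    apply: lerD.
      apply: (le_trans (nrmM _ _)); apply: ler_wpM2r; [exact: nrm_ge0' | exact: Ma].
    apply: (le_trans (nrmM3 _ _ _)); apply: ler_wpM2l; [by rewrite mulr_ge0 ?nrm_ge0' | exact: Mb].
  apply: real_ineq; rewrite ?nrm_ge0' //.
- have [s [hs e]] := case2 hl n.
  rewrite e -scalerAr (nrm_scale HA).
  have cu : u * b ^+ n = b ^+ n * u by apply: commrX; rewrite /GRing.comm bu.
  have decomp : (1 - v * u) * (b ^+ n * a ^+ n)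
      = b ^+ n * Eseq a x n + Eseq b y n * u * a ^+ n.
    rewrite !Eform -/u -/v.
    have -> : 1 - v * u = (1 - u) + (1 - v) * u
      by rewrite mulrBl mul1r addrA subrK.
    rewrite mulrDl; congr (_ + _).
      by rewrite mulrA mulrBl mul1r cu -{1}(mulr1 (b ^+ n)) -mulrBr mulrA.
    by rewrite -(mulrA (1 - v)) (mulrA u) cu !mulrA.
  rewrite decomp.
  apply: (le_trans (ler_piMl (nrm_ge0' _) hs)).
  apply: (le_trans (nrm_triangle HA _ _)).
  apply: (le_trans (y := K * nrm (Eseq a x n) + nrm (Eseq b y n) * nrm u * K)).
    apply: lerD.
      apply: (le_trans (nrmM _ _)); apply: ler_wpM2r; [exact: nrm_ge0' | exact: Mb].
    apply: (le_trans (nrmM3 _ _ _)); apply: ler_wpM2l; [by rewrite mulr_ge0 ?nrm_ge0' | exact: Ma].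
  apply: real_ineq2; rewrite ?nrm_ge0' //.
Qed.

Lemma z_inv : is_gcEP_inverse star nrm (a * b) (y * x).
Proof.
split; [exact: zi | exact: zii |].
apply: qn_lim; last exact: qn_g.
by move=> n; apply: nrm_ge0'.
Qed.

End Main.

Lemma main_thm (a b : A) (lambda mu : R[i]) :
  has_gcEP star nrm a -> has_gcEP star nrm b ->
  lambda != 0 -> mu != 0 ->
  a * b = lambda *: (b * a) -> star a * b = mu *: (b * star a) ->
  has_gcEP star nrm (a * b) /\
  (forall x y z : A,
     is_gcEP_inverse star nrm a x -> is_gcEP_inverse star nrm b y ->
     is_gcEP_inverse star nrm (a * b) z ->
     z = y * x /\ y * x = lambda^-1 *: (x * y)).
Proof.
move=> [x Hx] [y Hy] l0 m0 hab hab'; split.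
  by exists (y * x); exact: (z_inv _ _ _ _ _ _ Hx Hy l0 m0 hab hab').
move=> x' y' z Hx' Hy' Hz; split.
  exact: (U _ _ _ Hz (z_inv _ _ _ _ _ _ Hx' Hy' l0 m0 hab hab')).
exact: (yx _ _ _ _ _ _ Hx' Hy' l0 m0 hab hab').
Qed.
End Alg.

Theorem theorem3p3 (R : realType) (A : algType R[i]) (star : A -> A)
    (nrm : A -> R) (HA : banach_star_algebra star nrm)
    (a b : A) (lambda mu : R[i]) :
  has_gcEP star nrm a -> has_gcEP star nrm b ->
  lambda != 0 -> mu != 0 ->
  a * b = lambda *: (b * a) -> star a * b = mu *: (b * star a) ->
  has_gcEP star nrm (a * b) /\
  (forall x y z : A,
     is_gcEP_inverse star nrm a x -> is_gcEP_inverse star nrm b y ->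
     is_gcEP_inverse star nrm (a * b) z ->
     z = y * x /\ y * x = lambda^-1 *: (x * y)).
Proof. exact: (@main_thm R A star nrm HA a b lambda mu). Qed.
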